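(* For $n\ge5$, the symmetric space $\mathrm{SL}_{n+1}\mathbb R/\mathrm{SO}(n+1)$ has property $\mathbf E$.
   Context: Property $\mathbf E$ for a symmetric space $X$ of noncompact type: for every $x\in X$ with stabilizer $K$ (in the identity component of the isometry group) and every maximal flat through $x$ with tangent space $\mathcal F\subset T_xX$, putting $r=\mathrm{rank}(X)$, for any basis $\{v_1,\dots,v_r\}$ of $\mathcal F$ there is an orthonormal $3r$-frame $v_1',v_1'',v_1''',\dots,v_r',v_r'',v_r'''$ of $T_xX$ with $\mathrm{span}\{v_i',v_i'',v_i'''\}\subset(\mathrm{span}\{K_i\cdot\mathcal F\})^\perp$ for each $i$, where $K_i$ is the stabilizer of $v_i$ in $K$ acting by derivatives. *)

(* Defs.v *)
From HB Require Import structures.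
From mathcomp Require Import all_boot all_order all_algebra.
From mathcomp Require Import reals.
Set Implicit Arguments.
Unset Strict Implicit.
Unset Printing Implicit Defensive.
Import Order.TTheory GRing.Theory Num.Theory.
Local Open Scope ring_scope.

(* Model of the symmetric space X = SL_m(R)/SO(m):
   X = { P : m x m symmetric positive definite, det P = 1 },
   SL_m(R) acting by g . P = g P g^T (this action factors through the identity
   component PSL_m(R) of Isom(X)). *)
Section SLSO.
Variables (R : realType) (m : nat).

Definition symmx (A : 'M[R]_m) : Prop := A^T = A.

Definition posdefmx (P : 'M[R]_m) : Prop :=
  symmx P /\ forall v : 'rV[R]_m, v != 0 -> 0 < (v *m P *m v^T) 0 0.

Definition SLSO_point (P : 'M[R]_m) : Prop := posdefmx P /\ \det P = 1.

Definition SLSO_tangent (P V : 'M[R]_m) : Prop :=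
  symmx V /\ \tr (invmx P *m V) = 0.

Definition SLSO_metric (P V W : 'M[R]_m) : R :=
  \tr (invmx P *m V *m invmx P *m W).

(* derivative action of g on tangent vectors (and action on points) *)
Definition SLSO_act (g V : 'M[R]_m) : 'M[R]_m := g *m V *m g^T.

Definition SLSO_stab (P g : 'M[R]_m) : Prop := \det g = 1 /\ SLSO_act g P = P.

(* A subspace F of T_P X is abelian (Lie bracket vanishes after translating
   P to the base point: [P^{-1/2} V P^{-1/2}, P^{-1/2} W P^{-1/2}] = 0). *)
Definition SLSO_abelian (P : 'M[R]_m) (F : {vspace 'M[R]_m}) : Prop :=
  (forall V, V \in F -> SLSO_tangent P V) /\
  (forall V W, V \in F -> W \in F ->
     V *m invmx P *m W = W *m invmx P *m V).

(* tangent spaces at P of maximal flats through P = maximal abelian subspaces *)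
Definition SLSO_maxflat_tangent (P : 'M[R]_m) (F : {vspace 'M[R]_m}) : Prop :=
  SLSO_abelian P F /\
  (forall F' : {vspace 'M[R]_m}, SLSO_abelian P F' -> (F <= F')%VS -> F' = F).

(* Property E for X = SL_m(R)/SO(m).  The rank r is dim F (all maximal flats
   have dimension rank X).  The 3r-frame is e i a, i : 'I_r, a : 'I_3. *)
Definition property_E_SLSO : Prop :=
  forall P : 'M[R]_m, SLSO_point P ->
  forall F : {vspace 'M[R]_m}, SLSO_maxflat_tangent P F ->
  forall vs : (\dim F).-tuple 'M[R]_m, basis_of F vs ->
  exists e : 'I_(\dim F) -> 'I_3 -> 'M[R]_m,
    [/\ (forall i a, SLSO_tangent P (e i a)),
        (forall i a j b, SLSO_metric P (e i a) (e j b) =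
                          if (i == j) && (a == b) then 1 else 0) &
        (forall i a (k W : 'M[R]_m),
           SLSO_stab P k -> SLSO_act k (tnth vs i) = tnth vs i ->
           W \in F -> SLSO_metric P (e i a) (SLSO_act k W) = 0)].

End SLSO.

(* Main.v *)
Require Import Defs.
From HB Require Import structures.
From mathcomp Require Import all_boot all_order all_algebra.
From mathcomp Require Import reals.
From mathcomp Require Import fingroup perm.
From mathcomp Require Import complex spectral.
From mathcomp Require Import ring lra.
Set Implicit Arguments.
Unset Strict Implicit.
Unset Printing Implicit Defensive.
Import Order.TTheory GRing.Theory Num.Theory.
Local Open Scope ring_scope.
Definition pv (c k : nat) : nat :=
  nth 0%N (nth [::] [:: [:: 0; 1; 5; 2; 4; 3]; [:: 1; 2; 0; 3; 5; 4];
                       [:: 2; 3; 1; 4; 0; 5]]%N c) k.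
Definition ea (c j : nat) : nat := if (j < 5)%N then pv c j else c.
Definition eb (c j : nat) : nat := if (j < 5)%N then pv c j.+1 else j.+1.

Lemma pv_le c k : (pv c k <= 5)%N.
Proof.
rewrite /pv; case: c => [|[|[|c]]]; rewrite /= ?nth_nil //;
by case: k => [|[|[|[|[|[|k]]]]]] //=; rewrite ?nth_nil.
Qed.

Lemma ea_le n c j : (5 <= n)%N -> (c < 3)%N -> (j < n)%N -> (ea c j <= n)%N.
Proof.
move=> hn hc hj; rewrite /ea; case: ifP => _.
  exact: leq_trans (pv_le _ _) hn.
by apply: leq_trans hn; apply: leq_trans (_ : 2 <= 5)%N => //; rewrite -ltnS.
Qed.

Lemma eb_le n c j : (5 <= n)%N -> (j < n)%N -> (eb c j <= n)%N.
Proof.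
move=> hn hj; rewrite /eb; case: ifP => _ //.
exact: leq_trans (pv_le _ _) hn.
Qed.

Lemma path_distinct c d j k : (c < 3)%N -> (d < 3)%N -> (j < 5)%N -> (k < 5)%N ->
  ((pv c j == pv d k) && (pv c j.+1 == pv d k.+1)) ||
  ((pv c j == pv d k.+1) && (pv c j.+1 == pv d k)) -> (c == d) && (j == k).
Proof.
move=> hc hd hj hk.
case: c hc => [|[|[|c]]] // _; case: d hd => [|[|[|d]]] // _;
case: j hj => [|[|[|[|[|j]]]]] // _; case: k hk => [|[|[|[|[|k]]]]] // _.
Qed.

Lemma edge_distinct n c d j k : (c < 3)%N -> (d < 3)%N -> (j < n)%N -> (k < n)%N ->
  ((ea c j == ea d k) && (eb c j == eb d k)) ||
  ((ea c j == eb d k) && (eb c j == ea d k)) -> (c == d) && (j == k).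
Proof.
move=> hc hd hj hk; rewrite /ea /eb.
case: ifP => hj5; case: ifP => hk5.
- exact: path_distinct.
- have h1 := pv_le c j; have h2 := pv_le c j.+1.
  case/orP=> /andP[/eqP e1 /eqP e2].
    by move: h2; rewrite e2 hk5.
  by move: h1; rewrite e1 hk5.
- have h1 := pv_le d k; have h2 := pv_le d k.+1.
  case/orP=> /andP[/eqP e1 /eqP e2].
    by move: h2; rewrite -e2 hj5.
  by move: h1; rewrite -e2 hj5.
- case/orP=> /andP[/eqP e1 /eqP e2].
    by move: e2 => /succn_inj ->; rewrite e1 !eqxx.
  move/negbT: hk5; rewrite -leqNgt => hk5.
  by move: hc; rewrite e1 ltnS => /(leq_trans hk5).
Qed.

Lemma path_conn (R : Type) (mu : nat -> R) c n : (5 <= n)%N -> (c < 3)%N ->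
  (forall j, (j < n)%N -> mu (ea c j) = mu (eb c j)) ->
  forall a, (a <= n)%N -> mu a = mu c.
Proof.
move=> hn hc H a ha.
have H0 := H 0%N (leq_trans (isT : 0 < 5)%N hn).
have H1 := H 1%N (leq_trans (isT : 1 < 5)%N hn).
have H2 := H 2%N (leq_trans (isT : 2 < 5)%N hn).
have H3 := H 3%N (leq_trans (isT : 3 < 5)%N hn).
have H4 := H 4%N (leq_trans (isT : 4 < 5)%N hn).
case: (ltnP a 6) => ha6.
  rewrite /ea /eb /pv /= in H0 H1 H2 H3 H4.
  clear H; case: c hc H0 H1 H2 H3 H4 => [|[|[|c]]] // _ H0 H1 H2 H3 H4;
  case: a ha ha6 => [|[|[|[|[|[|a]]]]]] // _ _; simpl in *; congruence.
case: a ha ha6 => [|b] // ha hb6.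
have := H b ha; rewrite /ea /eb.
have -> : (b < 5)%N = false by rewrite ltnNge -ltnS hb6.
by move=> ->.
Qed.
Lemma select_free (R : numFieldType) (r k : nat) (M : 'M[R]_(r, k)) :
  row_free M -> exists s : 'I_r -> 'I_k, injective s /\ forall i, M i (s i) != 0.
Proof.
move=> hM.
have fA : row_full M^T by rewrite /row_full mxrank_tr.
have U := fullrowsub_unit fA.
set f := fullrankfun fA in U.
have finj : injective f := @fullrankfun_inj _ _ _ _ fA.
rewrite unitmxE unitfE /determinant in U.
have [s hs] : exists s : 'S_r,
  (-1) ^+ s * \prod_i (rowsub f M^T) i (s i) != 0.
  apply/existsP; apply: contraNT U => /existsPn H.
  by apply/eqP/big1 => s _; apply/eqP; move: (H s); rewrite negbK.
move: hs; rewrite mulf_eq0 negb_or => /andP[_ /prodf_neq0 hp].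
exists (fun j => f ((s^-1)%g j)); split.
  by move=> i j /finj /perm_inj.
move=> j; have := hp ((s^-1)%g j) isT.
by rewrite !mxE permKV.
Qed.
Lemma inord_eqE n a b : (a <= n)%N -> (b <= n)%N ->
  (inord a == inord b :> 'I_n.+1) = (a == b).
Proof. by move=> ha hb; rewrite -val_eqE /= !inordK. Qed.

Lemma comb (R : numFieldType) (n r : nat) : (5 <= n)%N ->
  forall lam : 'I_r -> 'I_n.+1 -> R,
  (forall x : 'I_r -> R, (forall a, \sum_i x i * lam i a = 0) -> forall i, x i = 0) ->
  (forall i, \sum_a lam i a = 0) ->
  exists p q : 'I_r -> 'I_3 -> 'I_n.+1,
   (forall i c, lam i (p i c) != lam i (q i c)) /\
   (forall i c j d, ((p i c == p j d) && (q i c == q j d)) ||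
                    ((p i c == q j d) && (q i c == p j d)) -> (i == j) && (c == d)).
Proof.
move=> hn lam Hind Hsum.
pose Mc (c : 'I_3) : 'M[R]_(r, n) :=
  \matrix_(i, j) (lam i (inord (ea c j)) - lam i (inord (eb c j))).
have free c : row_free (Mc c).
  rewrite -kermx_eq0; apply/eqP/row_matrixP => i0; rewrite row0.
  set x := row i0 (kermx (Mc c)).
  have hx : x *m Mc c = 0 by apply/sub_kermxP; exact: row_sub.
  clearbody x.
  pose mu (a : nat) := \sum_i x 0 i * lam i (inord a).
  have hmu : forall j, (j < n)%N -> mu (ea c j) = mu (eb c j).
    move=> j hj; have /matrixP/(_ 0 (Ordinal hj)) := hx; rewrite !mxE /Mc.
    under eq_bigr do rewrite mxE mulrBr.
    by rewrite sumrB => /eqP; rewrite subr_eq0 => /eqP.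
  have hc := path_conn hn (ltn_ord c) hmu.
  have mu0 : mu c = 0.
    have e1 : \sum_(a : 'I_n.+1) mu a = 0.
      rewrite /mu exchange_big /=; apply: big1 => i _.
      rewrite -mulr_sumr; under eq_bigr do rewrite inord_val.
      by rewrite Hsum mulr0.
    have e2 : \sum_(a : 'I_n.+1) mu a = n.+1%:R * mu c.
      rewrite (eq_bigr (fun _ => mu c)); last by move=> a _; apply: hc; rewrite -ltnS.
      by rewrite sumr_const card_ord mulr_natl.
    by move: e1; rewrite e2 => /eqP; rewrite mulf_eq0 pnatr_eq0 /= => /eqP.
  apply/rowP => i; rewrite mxE.
  apply: (Hind (fun i => x 0 i)) => a.
  have := hc a; rewrite /mu inord_val => ->; first exact: mu0.
  by rewrite -ltnS.
have /fin_all_exists [s hs] : forall c : 'I_3, exists s : 'I_r -> 'I_n,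
    injective s /\ forall i, Mc c i (s i) != 0.
  by move=> c; apply: select_free.
exists (fun (i : 'I_r) (c : 'I_3) => inord (ea c (s c i))), (fun (i : 'I_r) (c : 'I_3) => inord (eb c (s c i))).
split.
  by move=> i c; have := (hs c).2 i; rewrite /Mc mxE subr_eq0.
move=> i c j d.
have hl (c' : 'I_3) (i' : 'I_r) : (ea c' (s c' i') <= n)%N := ea_le hn (ltn_ord c') (ltn_ord _).
have hr (c' : 'I_3) (i' : 'I_r) : (eb c' (s c' i') <= n)%N := eb_le c' hn (ltn_ord _).
rewrite !inord_eqE // => /(edge_distinct (ltn_ord c) (ltn_ord d) (ltn_ord _) (ltn_ord _)).
case/andP => /eqP/val_inj ecd; subst d => /eqP/val_inj/((hs c).1) ->.
by rewrite !eqxx.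
Qed.
Section Geig.
Variable R : realType.
Local Notation rc := (real_complex R).
Local Notation CRe := (@complex.Re R).
Local Notation CIm := (@complex.Im R).

Lemma CRe_sum (I : Type) (s : seq I) (F : I -> R[i]) :
  CRe (\sum_(i <- s) F i) = \sum_(i <- s) CRe (F i).
Proof. by elim/big_rec2: _ => //= i y1 y2 _ <-; case: (F i); case: y2. Qed.

Lemma CIm_sum (I : Type) (s : seq I) (F : I -> R[i]) :
  CIm (\sum_(i <- s) F i) = \sum_(i <- s) CIm (F i).
Proof. by elim/big_rec2: _ => //= i y1 y2 _ <-; case: (F i); case: y2. Qed.

Lemma ReM n k (z : 'rV[R[i]]_n) (M : 'M[R]_(n, k)) :
  map_mx CRe (z *m map_mx rc M) = map_mx CRe z *m M.
Proof.
apply/rowP => j; rewrite !mxE CRe_sum; apply: eq_bigr => l _.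
by rewrite !mxE; case: (z 0 l) => a b /=; rewrite mulr0 subr0.
Qed.

Lemma ImM n k (z : 'rV[R[i]]_n) (M : 'M[R]_(n, k)) :
  map_mx CIm (z *m map_mx rc M) = map_mx CIm z *m M.
Proof.
apply/rowP => j; rewrite !mxE CIm_sum; apply: eq_bigr => l _.
by rewrite !mxE; case: (z 0 l) => a b /=; rewrite mulr0 add0r.
Qed.

Lemma ReZ n (a : R[i]) (z : 'rV[R[i]]_n) :
  map_mx CRe (a *: z) = CRe a *: map_mx CRe z - CIm a *: map_mx CIm z.
Proof. by apply/rowP => j; rewrite !mxE; case: a; case: (z 0 j). Qed.

Lemma ImZ n (a : R[i]) (z : 'rV[R[i]]_n) :
  map_mx CIm (a *: z) = CIm a *: map_mx CRe z + CRe a *: map_mx CIm z.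
Proof.
by apply/rowP => j; rewrite !mxE; case: a; case: (z 0 j) => ? ? ? ? /=; rewrite addrC.
Qed.

Definition qf n (u : 'rV[R]_n) (M : 'M[R]_n) (w : 'rV[R]_n) := (u *m M *m w^T) 0 0.

Lemma qf_sym n (u w : 'rV[R]_n) M : M^T = M -> qf u M w = qf w M u.
Proof.
move=> hM; rewrite /qf.
have -> : (u *m M *m w^T) 0 0 = ((u *m M *m w^T)^T) 0 0 by rewrite [in RHS]mxE.
by rewrite !trmx_mul trmxK hM mulmxA.
Qed.

Lemma qfDl n (u1 u2 w : 'rV[R]_n) M :
  qf (u1 + u2) M w = qf u1 M w + qf u2 M w.
Proof. by rewrite /qf !mulmxDl mxE. Qed.

Lemma qfZl n a (u w : 'rV[R]_n) M : qf (a *: u) M w = a * qf u M w.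
Proof. by rewrite /qf -!scalemxAl mxE. Qed.

Lemma qfNl n (u w : 'rV[R]_n) M : qf (- u) M w = - qf u M w.
Proof. by rewrite /qf !mulNmx mxE. Qed.

Lemma entL n (t1 t2 : 'rV[R]_n) (w : 'rV_n) a b :
  ((a *: t1 + b *: t2) *m w^T) 0 0 = a * (t1 *m w^T) 0 0 + b * (t2 *m w^T) 0 0.
Proof. by rewrite mulmxDl -!scalemxAl !mxE. Qed.

Definition posdef n (P : 'M[R]_n) :=
  P^T = P /\ forall v : 'rV[R]_n, v != 0 -> 0 < qf v P v.

Lemma posdef_ge0 n (P : 'M[R]_n) v : posdef P -> 0 <= qf v P v.
Proof.
move=> [_ hP]; have [->|hv] := eqVneq v 0; last exact/ltW/hP.
by rewrite /qf !mul0mx mxE.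
Qed.

Lemma posdef_unit n (P : 'M[R]_n) : posdef P -> P \in unitmx.
Proof.
move=> [_ hP]; rewrite -row_free_unit -kermx_eq0; apply/eqP/row_matrixP => i.
rewrite row0; apply/eqP; apply: contraT => hv.
have := hP _ hv; rewrite /qf.
have -> : row i (kermx P) *m P = 0 by apply/sub_kermxP; exact: row_sub.
by rewrite mul0mx mxE ltxx.
Qed.

Lemma common_geig n (P : 'M[R]_n.+1) (Vs : seq 'M[R]_n.+1) :
  posdef P -> (forall V, V \in Vs -> V^T = V) ->
  (forall V W, V \in Vs -> W \in Vs -> V *m invmx P *m W = W *m invmx P *m V) ->
  exists2 u : 'rV_n.+1, u != 0 &
    forall V, V \in Vs -> exists l, u *m V = l *: (u *m P).
Proof.
move=> hP hsym hcomm.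
have Pu := posdef_unit hP.
pose Bs := [seq map_mx rc (V *m invmx P) | V <- Vs].
have hBs : {in Bs &, forall A B, comm_mx A B}.
  move=> _ _ /mapP[V hV ->] /mapP[W hW ->].
  by rewrite /comm_mx -!map_mxM !mulmxA hcomm.
have [z z0 hz] := @common_eigenvector _ _ Bs (ltn0Sn n) hBs.
pose x := map_mx CRe z; pose y := map_mx CIm z.
have hxy : (x != 0) || (y != 0).
  apply: contraT; rewrite negb_or !negbK => /andP[/eqP hx /eqP hy].
  suff : z == 0 by rewrite (negbTE z0).
  apply/eqP/rowP => j.
  have /rowP/(_ j) := hx; have /rowP/(_ j) := hy.
  by rewrite !mxE; case: (z 0 j) => a b /= -> ->.
have key V : V \in Vs -> exists l, x *m V = l *: (x *m P) /\ y *m V = l *: (y *m P).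
  move=> hV; have hB : map_mx rc (V *m invmx P) \in Bs by apply/mapP; exists V.
  have := allP hz _ hB.
  move=> /sub_rVP[a ha].
  have hzV : z *m map_mx rc V = a *: (z *m map_mx rc P).
    by rewrite scalemxAl -ha -mulmxA -map_mxM mulmxKV.
  have ex : x *m V = CRe a *: (x *m P) - CIm a *: (y *m P).
    by rewrite /x -ReM hzV ReZ !ReM ImM.
  have ey : y *m V = CIm a *: (x *m P) + CRe a *: (y *m P).
    by rewrite /y -ImM hzV ImZ !ReM ImM.
  have hb : CIm a = 0.
    have e1 : qf x V y = qf y V x by apply: qf_sym; exact: hsym.
    have e2 : qf x P y = qf y P x by apply: qf_sym; case: hP.
    move: e1; rewrite /qf ex ey -scaleNr !entL.
    rewrite -/(qf x P y) -/(qf y P y) -/(qf x P x) -/(qf y P x) e2 => h.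
    have : CIm a * (qf x P x + qf y P y) = 0.
      have -> : CIm a * (qf x P x + qf y P y) =
        (CIm a * qf x P x + CRe a * qf y P x) -
        (CRe a * qf y P x + - CIm a * qf y P y) by ring.
      by rewrite -h subrr.
    move/eqP; rewrite mulf_eq0 => /orP[/eqP //|].
    have := posdef_ge0 x hP; have := posdef_ge0 y hP.
    case/orP: hxy => [hx|hy] h1 h2.
      by rewrite paddr_eq0 // (gt_eqF (proj2 hP _ hx)).
    by rewrite paddr_eq0 // andbC (gt_eqF (proj2 hP _ hy)).
  exists (CRe a); split.
    by rewrite ex hb scale0r subr0.
  by rewrite ey hb scale0r add0r.
case/orP: hxy => [hx|hy].
  by exists x => // V /key[l [h _]]; exists l.
by exists y => // V /key[l [_ h]]; exists l.
Qed.

End Geig.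
Section Diag.
Variable R : realType.

Lemma qfZr n a (u w : 'rV[R]_n) M : qf u M (a *: w) = a * qf u M w.
Proof. by rewrite /qf linearZ /= -scalemxAr mxE. Qed.

Lemma row_freeI m n (A : 'M[R]_(m, n)) :
  (forall v : 'rV_m, v *m A = 0 -> v = 0) -> row_free A.
Proof.
move=> H; rewrite -kermx_eq0; apply/eqP/row_matrixP => i; rewrite row0.
by apply: H; apply/sub_kermxP; exact: row_sub.
Qed.

Definition Emat n (k : 'I_n.+1) : 'M[R]_(n, n.+1) := \matrix_(i, j) ((lift k i == j)%:R).

Lemma Emat_k n k (v : 'rV[R]_n) : (v *m Emat k) 0 k = 0.
Proof.
rewrite mxE; apply: big1 => i _; rewrite mxE.
by rewrite eq_sym (negbTE (neq_lift k i)) mulr0.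
Qed.

Lemma Emat_lift n k (v : 'rV[R]_n) i : (v *m Emat k) 0 (lift k i) = v 0 i.
Proof.
rewrite mxE (bigD1 i) //= big1 ?addr0; first by rewrite mxE eqxx mulr1.
move=> j hj; rewrite mxE.
by rewrite (inj_eq (@lift_inj _ k)) (negbTE hj) mulr0.
Qed.

Lemma col_sandwich N n (x : 'rV[R]_N) (Z : 'M[R]_(n, N)) (M : 'M[R]_N) :
  col_mx x Z *m M *m (col_mx x Z)^T =
  block_mx (x *m M *m x^T) (x *m M *m Z^T) (Z *m M *m x^T) (Z *m M *m Z^T).
Proof. by rewrite tr_col_mx mul_col_mx mul_col_row. Qed.

Lemma diag11 (A : 'M[R]_1) : is_diag_mx A.
Proof. by apply/is_diag_mxP => i j; rewrite !ord1 eqxx. Qed.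

Lemma simdiag n (P : 'M[R]_n) (Vs : seq 'M[R]_n) :
  posdef P -> (forall V, V \in Vs -> V^T = V) ->
  (forall V W, V \in Vs -> W \in Vs -> V *m invmx P *m W = W *m invmx P *m V) ->
  exists U : 'M[R]_n, U *m P *m U^T = 1%:M /\
    forall V, V \in Vs -> is_diag_mx (U *m V *m U^T).
Proof.
elim: n P Vs => [|n IH] P Vs hP hsym hcomm.
  exists 1%:M; split; first by apply/matrixP => [] [].
  by move=> V _; apply/is_diag_mxP => [] [].
have [u u0 hu] := common_geig hP hsym hcomm.
have Psym : P^T = P by case: hP.
have Pu := posdef_unit hP.
have hq : 0 < qf u P u := proj2 hP _ u0.
set s := Num.sqrt (qf u P u).
have s0 : s != 0 by rewrite sqrtr_eq0 -ltNge.
set x := s^-1 *: u.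
have hx1 : x *m P *m x^T = 1%:M.
  rewrite [LHS]mx11_scalar -/(qf x P x) qfZl qfZr mulrA -invfM -expr2.
  by rewrite sqr_sqrtr ?ltW // mulVf // gt_eqF.
have hxV V : V \in Vs -> exists l, x *m V = l *: (x *m P).
  move=> /hu[l hl]; exists l.
  by rewrite /x -!scalemxAl hl !scalerA mulrC.
have [k hk] : exists k, x 0 k != 0.
  apply/existsP; apply: contraT => /existsPn H.
  have x0 : x = 0 by apply/rowP => j; rewrite [RHS]mxE; apply/eqP; move: (H j); rewrite negbK.
  move: u0; rewrite -(scalerK (invr_neq0 s0) u) -/x x0 scaler0 eqxx //.
pose Pi := 1%:M - P *m x^T *m x.
pose Y := Emat k *m Pi.
have hPi : Pi *m (P *m x^T) = 0.
  by rewrite /Pi mulmxBl mul1mx -!mulmxA (mulmxA x) hx1 mulmx1 subrr.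
have hY1 : Y *m P *m x^T = 0 by rewrite /Y -!mulmxA hPi mulmx0.
have hY1' : x *m P *m Y^T = 0.
  by have := congr1 trmx hY1; rewrite !trmx_mul trmxK Psym trmx0 mulmxA.
have Yfree : row_free Y.
  apply: row_freeI => v hv.
  set w := v *m Emat k.
  have hwPi : w *m Pi = 0 by rewrite /w -mulmxA.
  have hw : w = w *m P *m x^T *m x.
    by apply/eqP; rewrite -subr_eq0; move: hwPi; rewrite /Pi mulmxBr mulmx1 !mulmxA => ->.
  have t0 : (w *m P *m x^T) 0 0 = 0.
    have := congr1 (fun M : 'rV_n.+1 => M 0 k) hw; rewrite /= Emat_k mxE big_ord1.
    by move/esym/eqP; rewrite mulf_eq0 (negbTE hk) orbF => /eqP.
  have w0 : w = 0.
    by rewrite hw [w *m P *m x^T]mx11_scalar t0 raddf0 mul0mx.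
  apply/rowP => i; rewrite mxE -(Emat_lift k v i) -/w w0 mxE //.
clearbody Y.
have hYinj (v : 'rV_n) : v *m Y = 0 -> v = 0.
  by move=> hv; apply: (row_free_inj Yfree); rewrite mul0mx.
have hxVY V : V \in Vs -> x *m V *m Y^T = 0 /\ Y *m V *m x^T = 0.
  move=> hV; have [l hl] := hxV V hV.
  have e1 : x *m V *m Y^T = 0 by rewrite hl -scalemxAl hY1' scaler0.
  split => //; have := congr1 trmx e1.
  by rewrite !trmx_mul trmxK (hsym V hV) trmx0 mulmxA.
pose P2 := Y *m P *m Y^T.
have hP2 : posdef P2.
  split; first by rewrite /P2 !trmx_mul trmxK Psym mulmxA.
  move=> v v0; rewrite /qf /P2.
  have -> : v *m (Y *m P *m Y^T) *m v^T = (v *m Y) *m P *m (v *m Y)^T.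
    by rewrite trmx_mul !mulmxA.
  apply: (proj2 hP); apply: contra v0 => /eqP h; apply/eqP; exact: hYinj.
have P2u := posdef_unit hP2.
pose U0 : 'M[R]_n.+1 := col_mx x Y.
have U0u : U0 \in unitmx.
  rewrite -row_free_unit; apply: row_freeI.
  change (forall v : 'rV_(1 + n), v *m col_mx x Y = 0 -> v = 0).
  move=> v; rewrite -(hsubmxK v) mul_row_col => hv.
  have hl : lsubmx v = 0.
    have := congr1 (mulmx^~ (P *m x^T)) hv.
    rewrite mul0mx mulmxDl -!mulmxA (mulmxA x) hx1 (mulmxA Y) hY1 mulmx1 mulmx0 addr0.
    by [].
  move: hv; rewrite hl mul0mx add0r => /hYinj ->.
  by rewrite row_mx0.
have hZ : x^T *m x + Y^T *m invmx P2 *m Y = invmx P.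
  set Z := _ + _.
  have hZ1 : Z *m P *m U0^T = U0^T.
    change (Z *m P *m (col_mx x Y : 'M_(1 + n, n.+1))^T = (col_mx x Y)^T).
    rewrite tr_col_mx mul_mx_row; congr row_mx.
      have -> : Z *m P *m x^T = x^T *m (x *m P *m x^T) + Y^T *m invmx P2 *m (Y *m P *m x^T).
        by rewrite /Z !mulmxDl -!mulmxA.
      by rewrite hx1 hY1 mulmx1 mulmx0 addr0.
    have -> : Z *m P *m Y^T = x^T *m (x *m P *m Y^T) + Y^T *m (invmx P2 *m P2).
      by rewrite /Z /P2 !mulmxDl -!mulmxA.
    by rewrite hY1' mulVmx // mulmx0 add0r mulmx1.
  have hZ2 : Z *m P = 1%:M.
    have := congr1 (mulmx^~ (invmx U0^T)) hZ1.
    by rewrite /= mulmxK ?unitmx_tr // mulmxV ?unitmx_tr.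
  by rewrite -[Z]mulmx1 -(mulmxV Pu) mulmxA hZ2 mul1mx.
pose Vs2 := [seq Y *m V *m Y^T | V <- Vs].
have hsym2 V2 : V2 \in Vs2 -> V2^T = V2.
  by move=> /mapP[V hV ->]; rewrite !trmx_mul trmxK (hsym V hV) mulmxA.
have e V W : V \in Vs -> Y *m V *m Y^T *m invmx P2 *m (Y *m W *m Y^T) =
                          Y *m (V *m invmx P *m W) *m Y^T.
  move=> hV; rewrite -hZ mulmxDr mulmxDl mulmxDr mulmxDl !mulmxA.
  by rewrite (proj2 (hxVY V hV)) !mul0mx add0r.
have hcomm2 V2 W2 : V2 \in Vs2 -> W2 \in Vs2 ->
    V2 *m invmx P2 *m W2 = W2 *m invmx P2 *m V2.
  move=> /mapP[V hV ->] /mapP[W hW ->].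
  by rewrite !e // hcomm.
have [U2 [hU2P hU2V]] := IH P2 Vs2 hP2 hsym2 hcomm2.
have s1 M : (U2 *m Y) *m M *m (U2 *m Y)^T = U2 *m (Y *m M *m Y^T) *m U2^T.
  by rewrite trmx_mul !mulmxA.
have s2 M : x *m M *m (U2 *m Y)^T = (x *m M *m Y^T) *m U2^T.
  by rewrite trmx_mul !mulmxA.
have s3 M : U2 *m Y *m M *m x^T = U2 *m (Y *m M *m x^T).
  by rewrite !mulmxA.
exists (col_mx x (U2 *m Y)); split.
  change ((col_mx x (U2 *m Y) : 'M_(1 + n, n.+1)) *m P *m (col_mx x (U2 *m Y))^T
     = 1%:M :> 'M_(1 + n)).
  rewrite col_sandwich s1 s2 s3 hx1 hY1 hY1' hU2P mul0mx mulmx0.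
  by rewrite -scalar_mx_block.
move=> V hV.
change (is_diag_mx ((col_mx x (U2 *m Y) : 'M_(1 + n, n.+1)) *m V *m
   (col_mx x (U2 *m Y))^T : 'M_(1 + n))).
rewrite col_sandwich s1 s2 s3 (proj1 (hxVY V hV)) (proj2 (hxVY V hV)) mul0mx mulmx0.
rewrite is_diag_block_mx // !eqxx diag11 /=.

by apply: hU2V; apply/mapP; exists V.
Qed.
End Diag.
Section Final.
Variable R : realType.

Lemma tr_delta_mul m (a b : 'I_m) (M : 'M[R]_m) : \tr (delta_mx a b *m M) = M b a.
Proof.
rewrite /mxtrace (bigD1 a) //= big1 ?addr0 => [|c hc].
  rewrite mxE (bigD1 b) //= big1 ?addr0 => [|d hd]; first by rewrite mxE !eqxx mul1r.
  by rewrite mxE (negbTE hd) andbF mul0r.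
rewrite mxE big1 // => d _; rewrite mxE (negbTE hc) /= mul0r //.
Qed.

Definition s2 : R := (Num.sqrt 2)^-1.

Lemma s2E : s2 * (s2 * 1 + s2 * 1) = 1.
Proof.
have h2 : (0 : R) < 2 by [].
have hs : Num.sqrt (2 : R) != 0 by rewrite sqrtr_eq0 -ltNge.
rewrite !mulr1 -mulr2n mulrnAr -mulr_natr -expr2 /s2 exprVn sqr_sqrtr ?ltW //.
by rewrite mulVf // gt_eqF.
Qed.

Definition Ed m (p q : 'I_m) : 'M[R]_m := s2 *: (delta_mx p q + delta_mx q p).

Lemma tr_Ed m (p q : 'I_m) M : \tr (Ed p q *m M) = s2 * (M q p + M p q).
Proof.
by rewrite /Ed -scalemxAl mxtraceZ mulmxDl mxtraceD !tr_delta_mul.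
Qed.

Lemma Ed_E m (p q a b : 'I_m) :
  Ed p q a b = s2 * (((a == p) && (b == q))%:R + ((a == q) && (b == p))%:R).
Proof. by rewrite !mxE. Qed.

Lemma Ed_sym m (p q : 'I_m) : (Ed p q)^T = Ed p q.
Proof. by rewrite /Ed linearZ /= linearD /= !trmx_delta addrC. Qed.

Lemma Ed_tr m (p q : 'I_m) : p != q -> \tr (Ed p q) = 0.
Proof.
move=> hpq; rewrite /Ed mxtraceZ mxtraceD.
rewrite -[delta_mx p q]mulmx1 -[delta_mx q p]mulmx1 !tr_delta_mul !mxE.
by rewrite eq_sym (negbTE hpq) addr0 mulr0.
Qed.

Lemma diag_comm_zero m (D Y : 'M[R]_m) p q :
  is_diag_mx D -> Y *m D = D *m Y -> D p p != D q q -> Y p q = 0.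
Proof.
move=> /is_diag_mxP hD hc hpq.
have /matrixP/(_ p q) := hc; rewrite !mxE.
rewrite (bigD1 q) //= big1 ?addr0 => [|c hcq]; last by rewrite hD ?mulr0.
rewrite (bigD1 p) //= big1 ?addr0 => [|c hcp]; last by rewrite hD ?mul0r // eq_sym.
move/eqP; rewrite mulrC -subr_eq0 -mulrBl mulf_eq0 subr_eq0 eq_sym (negbTE hpq).
by move/eqP.
Qed.

Lemma stab_comm m (P k V W : 'M[R]_m) : P \in unitmx -> \det k = 1 ->
  k *m P *m k^T = P -> k *m V *m k^T = V ->
  W *m invmx P *m V = V *m invmx P *m W ->
  (k *m W *m k^T) *m invmx P *m V = V *m invmx P *m (k *m W *m k^T).
Proof.
move=> Pu dk hkP hkV hWV.
have ku : k \in unitmx by rewrite unitmxE dk unitr1.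
have kTu : k^T \in unitmx by rewrite unitmx_tr.
have hkPk : k^T *m invmx P *m k = invmx P.
  have h : k^T *m invmx P *m k *m P = 1%:M.
    have e1 : k^T *m invmx P *m k *m P *m k^T = k^T.
      by rewrite -!mulmxA (mulmxA k) hkP mulVmx // mulmx1.
    by rewrite -[LHS](mulmxK kTu) e1 mulmxV.
  by rewrite -[LHS]mulmx1 -(mulmxV Pu) mulmxA h mul1mx.
have -> : k *m W *m k^T *m invmx P *m V =
          k *m W *m (k^T *m invmx P *m k) *m V *m k^T.
  by rewrite -{1}hkV !mulmxA.
have -> : V *m invmx P *m (k *m W *m k^T) =
          k *m V *m (k^T *m invmx P *m k) *m W *m k^T.
  by rewrite -{1}hkV !mulmxA.
by rewrite hkPk; move: (congr1 (fun X => k *m X *m k^T) hWV); rewrite /= !mulmxA.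
Qed.

End Final.
Arguments Ed {R m}.
Arguments s2 {R}.
Theorem proposition11p1 (R : realType) (n : nat) :
  (5 <= n)%N -> property_E_SLSO R n.+1.
Proof.
move=> hn P [[Psym Ppos] detP] F [[hFt hFc] _] vs hb.
have hP : posdef P by split.
have Pu := posdef_unit hP.
have memF V : V \in (vs : seq _) -> V \in F by move=> hV; apply: (basis_mem hb).
have vsF i : tnth vs i \in F by apply: memF; apply: mem_tnth.
have hsym V : V \in (vs : seq _) -> V^T = V by move=> /memF /hFt [].
have hcomm V W : V \in (vs : seq _) -> W \in (vs : seq _) ->
    V *m invmx P *m W = W *m invmx P *m V.
  by move=> /memF hV /memF hW; apply: hFc.
have [U [hUP hUV]] := simdiag hP hsym hcomm.
have [Uu _] : U \in unitmx /\ (P *m U^T) \in unitmx by apply: mulmx1_unit; rewrite mulmxA.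
have hPinv : invmx P = U^T *m U.
  have h1 : P *m (U^T *m U) = 1%:M by rewrite mulmxA; apply: mulmx1C; rewrite mulmxA.
  by rewrite -[RHS](mulKmx Pu) h1 mulmx1.
set T := invmx U.
have hUT : U *m T = 1%:M by rewrite mulmxV.
have hTU : T^T *m U^T = 1%:M by rewrite -trmx_mul hUT trmx1.
set D := fun i => U *m tnth vs i *m U^T.
have hD i : is_diag_mx (D i) by apply: hUV; apply: mem_tnth.
pose lam i a := D i a a.
have Hind : forall x : 'I_(\dim F) -> R,
    (forall a, \sum_i x i * lam i a = 0) -> forall i, x i = 0.
  move=> x hx; have /freeP Hf := basis_free hb; apply: Hf.
  have e : U *m (\sum_i x i *: vs`_i) *m U^T = 0.
    rewrite mulmx_sumr mulmx_suml; apply/matrixP => a b.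
    rewrite summxE mxE; have [<-|hab] := eqVneq a b.
      rewrite -[RHS](hx a); apply: eq_bigr => i _.
      by rewrite -scalemxAr -scalemxAl mxE -(tnth_nth 0).
    apply: big1 => i _.
    rewrite -scalemxAr -scalemxAl mxE -(tnth_nth 0).
    by have /is_diag_mxP -> := hD i; rewrite ?mulr0.
  by rewrite -[LHS](mulKmx Uu) -[X in _ *m X](mulmxK (_ : U^T \in unitmx)) ?unitmx_tr // e mul0mx mulmx0.
have Hsum : forall i, \sum_a lam i a = 0.
  move=> i; have := (hFt _ (vsF i)).2.
  by rewrite hPinv -mulmxA mxtrace_mulC => h; exact: h.
have [p [q [hsep hinj]]] := comb hn Hind Hsum.
have hpq i c : p i c != q i c by apply: contraNneq (hsep i c) => ->.
have K1 E W : SLSO_metric P (T *m E *m T^T) W = \tr (E *m (U *m W *m U^T)).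
  rewrite /SLSO_metric hPinv.
  have -> : U^T *m U *m (T *m E *m T^T) = U^T *m E *m T^T.
    by rewrite !mulmxA -(mulmxA _ U T) hUT mulmx1.
  have -> : U^T *m E *m T^T *m (U^T *m U) = U^T *m E *m U.
    by rewrite !mulmxA -(mulmxA _ T^T U^T) hTU mulmx1.
  by rewrite -!mulmxA mxtrace_mulC !mulmxA.
have K3 E : U *m (T *m E *m T^T) *m U^T = E.
  by rewrite !mulmxA hUT mul1mx -mulmxA hTU mulmx1.
exists (fun i a => T *m Ed (p i a) (q i a) *m T^T); split.
- move=> i a; split.
    by rewrite /symmx !trmx_mul trmxK Ed_sym mulmxA.
  rewrite hPinv.
  have -> : U^T *m U *m (T *m Ed (p i a) (q i a) *m T^T) = U^T *m Ed (p i a) (q i a) *m T^T.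
    by rewrite !mulmxA -(mulmxA _ U T) hUT mulmx1.
  by rewrite -mulmxA mxtrace_mulC -mulmxA hTU mulmx1 Ed_tr.
- move=> i a j b; rewrite K1 K3 tr_Ed !Ed_E.
  have [/andP[/eqP eij /eqP eab]|hne] := boolP ((i == j) && (a == b)).
    subst j b; rewrite !eqxx /= eq_sym (negbTE (hpq i a)) /=.
    by rewrite addr0 add0r s2E.
  have h1 : ((p i a == p j b) && (q i a == q j b)) = false.
    by apply: contraNF hne => h; apply: hinj; rewrite h.
  have h2 : ((p i a == q j b) && (q i a == p j b)) = false.
    by apply: contraNF hne => h; apply: hinj; rewrite h orbT.
  have h3 : ((q i a == p j b) && (p i a == q j b)) = false by rewrite andbC.
  have h4 : ((q i a == q j b) && (p i a == p j b)) = false by rewrite andbC.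
  by rewrite h1 h2 h3 h4 /= !(mulr0n, addr0, mulr0).
- move=> i a k W [dk hkP] hkv hW.
  rewrite K1 tr_Ed.
  have hc := stab_comm Pu dk hkP hkv (hFc _ _ hW (vsF i)).
  set Y := k *m W *m k^T in hc *.
  have hY : (U *m Y *m U^T) *m D i = D i *m (U *m Y *m U^T).
    rewrite /D.
    have -> : U *m Y *m U^T *m (U *m tnth vs i *m U^T) =
              U *m (Y *m (U^T *m U) *m tnth vs i) *m U^T by rewrite !mulmxA.
    have -> : U *m tnth vs i *m U^T *m (U *m Y *m U^T) =
              U *m (tnth vs i *m (U^T *m U) *m Y) *m U^T by rewrite !mulmxA.
    by rewrite -hPinv hc.
  rewrite (diag_comm_zero (hD i) hY (hsep i a)).
  rewrite (diag_comm_zero (hD i) hY _) ?addr0 ?mulr0 //.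
  by rewrite eq_sym; apply: hsep.
Qed.
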